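(* For every integer $n\ge 1$, $$m^*(n,4)\le m^*\big(n,4,2\lceil\log_2(n+1)\rceil\big)\le 4\lceil\log_2(n+1)\rceil.$$
   Context: For a binary matrix $M$ and a nonempty set $S$ of its columns, $S$ is a stopping set if the submatrix formed by $S$ has no row with exactly one $1$; $s(M)$ is the minimum size of a stopping set ($+\infty$ if none). $M$ is $d$-decodable if $s(M)\ge d+1$, and $(d,k)$-decodable if moreover every column has exactly $k$ ones. $m^*(n,d)$ (resp. $m^*(n,d,k)$) is the minimum $m$ such that an $m\times n$ $d$-decodable (resp. $(d,k)$-decodable) matrix exists. *)

(* Defs.v *)
From Stdlib Require Import ClassicalEpsilon.
From mathcomp Require Import all_boot all_order all_algebra.
Set Implicit Arguments. Unset Strict Implicit. Unset Printing Implicit Defensive.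

(* Extended naturals: [None] stands for +infinity. *)
Definition le_inf (a b : option nat) : bool :=
  match b with
  | None => true
  | Some b' => match a with None => false | Some a' => (a' <= b')%N end
  end.

Definition natmin (P : pred nat) : option nat :=
  match excluded_middle_informative (exists k, P k) with
  | left h => Some (ex_minn h)
  | right _ => None
  end.

Definition stopping_set (m n : nat) (M : 'M[bool]_(m, n)) (S : {set 'I_n}) : bool :=
  (S != set0) && [forall i : 'I_m, #|[set j in S | M i j]| != 1%N].

Definition stop_dist (m n : nat) (M : 'M[bool]_(m, n)) : option nat :=
  natmin (fun s => [exists S : {set 'I_n}, stopping_set M S && (#|S| == s)]).

Definition decodable (m n : nat) (M : 'M[bool]_(m, n)) (d : nat) : bool :=
  le_inf (Some d.+1) (stop_dist M).

Definition decodable_k (m n : nat) (M : 'M[bool]_(m, n)) (d k : nat) : bool :=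
  decodable M d && [forall j : 'I_n, #|[set i : 'I_m | M i j]| == k].

Definition mstar (n d : nat) : option nat :=
  natmin (fun m => [exists M : 'M[bool]_(m, n), decodable M d]).

Definition mstar_k (n d k : nat) : option nat :=
  natmin (fun m => [exists M : 'M[bool]_(m, n), decodable_k M d k]).

(* Main.v *)
Require Import Defs.
From mathcomp Require Import all_boot all_order all_algebra.
From Stdlib Require Import ClassicalEpsilon.
From mathcomp Require Import finfield ring zify.
Import GRing.Theory.

Lemma natmin_le (P : pred nat) m : P m -> le_inf (natmin P) (Some m).
Proof.
rewrite /natmin => Pm; case: excluded_middle_informative => [h|[]]; last by exists m.
by case: ex_minnP => k _ /(_ m Pm).
Qed.

Lemma part1 n d k : le_inf (mstar n d) (mstar_k n d k).
Proof.
rewrite /mstar_k /natmin; case: excluded_middle_informative => // h.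
case: ex_minnP => m /existsP[M /andP[HM _]] _.
by apply: natmin_le; apply/existsP; exists M.
Qed.

Lemma decodable_of m n (M : 'M[bool]_(m,n)) d :
  (forall S, stopping_set M S -> (d < #|S|)%N) -> decodable M d.
Proof.
move=> H; rewrite /decodable /stop_dist /natmin.
case: excluded_middle_informative => // h.
case: ex_minnP => s /existsP[S /andP[HS /eqP <-]] _; exact: H.
Qed.

Section Mat.
Variables (T : finType) (m n : nat) (e : #|T| = m) (P : T -> 'I_n -> bool).
Definition gr (i : 'I_m) : T := enum_val (cast_ord (esym e) i).
Definition hr (u : T) : 'I_m := cast_ord e (enum_rank u).
Lemma grK u : gr (hr u) = u. Proof. by rewrite /gr /hr cast_ordK enum_rankK. Qed.
Lemma gr_inj : injective gr. Proof. by move=> i j /enum_val_inj /cast_ord_inj. Qed.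
Definition Mof : 'M[bool]_(m, n) := \matrix_(i, j) P (gr i) j.
Lemma Mof_stop S : stopping_set Mof S ->
  (S != set0) /\ forall u, #|[set j in S | P u j]| != 1%N.
Proof.
case/andP=> S0 /forallP H; split => // u.
suff -> : [set j in S | P u j] = [set j in S | Mof (hr u) j] by apply: H.
by apply/setP => j; rewrite !inE mxE grK.
Qed.
Lemma Mof_col j : #|[set i | Mof i j]| = #|[set u | P u j]|.
Proof.
rewrite -(card_imset _ gr_inj); apply: eq_card => u; rewrite [RHS]inE.
apply/imsetP/idP => [[i]|Pu]; first by rewrite inE mxE => ? ->.
by exists (hr u); rewrite ?inE ?mxE grK.
Qed.
End Mat.

Local Open Scope ring_scope.

Lemma cube_contra (R : fieldType) (pc : (2 \in [pchar R])%N) (a b c d : R) :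
  uniq [:: a; b; c; d] -> a + b + c + d = 0 -> a ^+ 3 + b ^+ 3 + c ^+ 3 + d ^+ 3 = 0 -> False.
Proof.
move=> U s0 s3.
have two : (2%:R : R) = 0 by rewrite (pcharf0 pc).
have neg (x : R) : - x = x.
  apply/eqP; rewrite eq_sym -subr_eq0 opprK -mulr2n -mulr_natr two mulr0 //.
have dE : d = a + b + c.
  by rewrite -[d]neg -[LHS]add0r -s0; ring.
have Q : (a + b) * (b + c) * (c + a) = 0.
  rewrite -s3 dE.
  have -> : (a + b) * (b + c) * (c + a) = a ^+ 3 + b ^+ 3 + c ^+ 3 + (a + b + c) ^+ 3
     - 2%:R * (a ^+ 3 + b ^+ 3 + c ^+ 3 + (a + b) * (b + c) * (c + a)) by ring.
  by rewrite two mul0r subr0.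
have eqx (x y : R) : x + y = 0 -> x = y.
  by move=> h; rewrite -[y]neg; apply/eqP; rewrite -subr_eq0 opprK h.
move: U; rewrite /= !inE.
move: Q => /eqP; rewrite !mulf_eq0 => /orP[/orP[]|] /eqP /eqx ->; rewrite ?eqxx /= ?andbF ?orbT ?andbF //.
Qed.

Lemma F2c (y : 'F_2) : y = 0 \/ y = 1.
Proof. case: y => [[|[|k]]] //= H; [left|right]; exact: val_inj. Qed.

Section Constr.
Variables (F : finFieldType) (pc : (2 \in [pchar F])%N).
Let R := pPrimeCharType pc.
Let d := \dim (fullv : {vspace R}).
Let B := vbasis (fullv : {vspace R}).
Definition cf (b : 'I_d) (x : R) : bool := coord B b x != 0.
Variables (n : nat) (X : 'I_n -> R) (Xinj : injective X) (b0 : 'I_d).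
Definition phi (t : bool) (x : R) : R := if t then x ^+ 3 else x.
Definition Pr (u : bool * 'I_d * bool) (j : 'I_n) : bool :=
  cf u.1.2 (phi u.1.1 (X j)) == u.2.

Lemma coord_inj x y : (forall b, coord B b x = coord B b y) -> x = y.
Proof.
move=> H; rewrite (coord_basis (vbasisP fullv) (memvf x)).
rewrite (coord_basis (vbasisP fullv) (memvf y)); apply: eq_bigr => i _; by rewrite H.
Qed.

Lemma count_split (S : {set 'I_n}) (f : 'I_n -> bool) :
  (#|[set j in S | f j]| + #|[set j in S | ~~ f j]| = #|S|)%N.
Proof.
rewrite -(cardsID [set j | f j] S); congr (_ + _)%N; apply: eq_card => j;
  rewrite !inE //; by rewrite andbC.
Qed.

Lemma sumF2 (S : {set 'I_n}) (y : 'I_n -> 'F_2) :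
  \sum_(j in S) y j = (#|[set j in S | y j != 0]|)%:R.
Proof.
rewrite -sum1_card natr_sum big_mkcond [RHS]big_mkcond /=; apply: eq_bigr => j _.
rewrite !inE; case: (j \in S) => //=; case: (F2c (y j)) => ->; by rewrite ?eqxx ?oner_eq0.
Qed.


Lemma stop5 (S : {set 'I_n}) : S != set0 ->
  (forall u, #|[set j in S | Pr u j]| != 1%N) -> (5 <= #|S|)%N.
Proof.
move=> S0 H.
have cnt t b : (#|[set j in S | cf b (phi t (X j))]| != 1%N) /\
   (#|S| - #|[set j in S | cf b (phi t (X j))]| != 1%N)%N.
  have H1 := H (t, b, true); have H2 := H (t, b, false).
  rewrite -(count_split S (fun j => cf b (phi t (X j)))) addKn.
  split.
    suff <- : [set j in S | Pr (t, b, true) j] = [set j in S | cf b (phi t (X j))] by [].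
    by apply/setP => j; rewrite !inE /Pr /= eqb_id.
  suff <- : [set j in S | Pr (t, b, false) j] = [set j in S | ~~ cf b (phi t (X j))] by [].
  by apply/setP => j; rewrite !inE /Pr /= eqbF_neg.
have sub t b : (#|[set j in S | cf b (phi t (X j))]| <= #|S|)%N.
  by apply: subset_leq_card; apply/subsetP=> j; rewrite inE => /andP[].
have S1 : (1 < #|S|)%N.
  have S0' : (0 < #|S|)%N by rewrite card_gt0.
  have [c1 c2] := cnt false b0; have := sub false b0; lia.
have [j1 [j2 [Sj1 Sj2 j12]]] := card_gt1P S1.
have [b hb] : exists b, cf b (X j1) != cf b (X j2).
  case: (pickP (fun b => cf b (X j1) != cf b (X j2))) => [bb hb'|hh]; first by exists bb.
  move/negP: j12; case; apply/eqP/Xinj/coord_inj => b.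
  have := hh b; rewrite /= /cf.
  by case: (F2c (coord B b (X j1))) => ->; case: (F2c (coord B b (X j2))) => ->;
    rewrite ?eqxx ?oner_eq0.
have S4 : (4 <= #|S|)%N.
  have [c1 c2] := cnt false b.
  have cs := count_split S (fun j => cf b (phi false (X j))).
  have [A1 A2] : (0 < #|[set j in S | cf b (phi false (X j))]|)%N /\
                 (0 < #|[set j in S | ~~ cf b (phi false (X j))]|)%N.
    move: hb; rewrite /phi /=.
    case E1: (cf b (X j1)); case E2: (cf b (X j2)) => //= _.
      by split; apply/card_gt0P; [exists j1 | exists j2]; rewrite !inE ?Sj1 ?Sj2 ?E1 ?E2.
    by split; apply/card_gt0P; [exists j2 | exists j1]; rewrite !inE ?Sj1 ?Sj2 ?E1 ?E2.
  lia.
rewrite leqNgt; apply/negP => S5.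
have h4 : #|S| = 4%N by lia.
have even t bb : ((#|[set j in S | cf bb (phi t (X j))]|)%:R : 'F_2) = 0.
  have [c1 c2] := cnt t bb; have := sub t bb.
  rewrite -(Fp_nat_mod (isT : prime 2)) h4 => c3.
  have -> : (#|[set j in S | cf bb (phi t (X j))]| %% 2 = 0)%N by move: c1 c2 c3; rewrite h4; lia.
  by [].
have sum0 t : \sum_(j in S) phi t (X j) = 0.
  apply: coord_inj => bb; rewrite linear_sum linear0 /= sumF2.
  by rewrite -[RHS](even t bb).
move: (enum_uniq S) (cardE S) (sum0 false) (sum0 true).
rewrite h4 -!big_enum /=.
case: (enum S) => [|k1 [|k2 [|k3 [|k4 [|]]]]] //= U _.
rewrite !big_cons !big_nil !addr0 !addrA => s0 s3.
apply: (@cube_contra R pc (X k1) (X k2) (X k3) (X k4)) => //.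
by have := map_inj_uniq Xinj [:: k1; k2; k3; k4]; rewrite /= => ->.
Qed.

Lemma Pr_col j : #|[set u | Pr u j]| = (2 * d)%N.
Proof.
have -> : [set u | Pr u j] = [set (w.1, w.2, cf w.2 (phi w.1 (X j))) | w : bool * 'I_d].
  apply/setP => [[[t b] v]]; rewrite inE /Pr /=.
  apply/eqP/imsetP => [<-|[[t' b'] _ [-> -> ->]]]; [by exists (t, b) | by []].
rewrite card_imset; first by rewrite card_prod card_bool card_ord.
by move=> [t b] [t' b'] [-> ->].
Qed.

End Constr.

Theorem corollary4p4 (n : nat) (hn : (1 <= n)%N) :
  le_inf (mstar n 4) (mstar_k n 4 (2 * up_log 2 n.+1)) /\
  le_inf (mstar_k n 4 (2 * up_log 2 n.+1)) (Some (4 * up_log 2 n.+1)%N).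
Proof.
split; first exact: part1.
set L := up_log 2 n.+1.
have L0 : (0 < L)%N by rewrite /L up_log_gt0.
have [F pc cF] := pPrimePowerField (isT : prime 2) L0.
pose R := pPrimeCharType pc.
have cR : #|R| = (2 ^ L)%N := cF.
have dL : \dim (fullv : {vspace R}) = L by rewrite pprimeChar_dimf cR pfactorK.
have hnR : (n <= #|R|)%N.
  by rewrite cR; have := @up_logP 2 n.+1 isT; rewrite -/L; lia.
pose X := fun j : 'I_n => (enum_val (widen_ord hnR j) : R).
have Xinj : injective X.
  by move=> i j /enum_val_inj /(congr1 val) /= /val_inj.
have b0 : 'I_(\dim (fullv : {vspace R})) by apply: (Ordinal (n := _) (m := 0)); rewrite dL.
pose T : finType := (bool * 'I_(\dim (fullv : {vspace R})) * bool)%type.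
have e : #|T| = (4 * L)%N by rewrite !card_prod card_bool card_ord dL; lia.
pose M := @Mof T (4 * L)%N n e (@Pr F pc n X).
apply: natmin_le; apply/existsP; exists M; apply/andP; split.
  apply: decodable_of => S /Mof_stop [S0 HS].
  exact: (@stop5 _ _ _ _ Xinj b0 S S0 HS).
apply/forallP => j; apply/eqP; rewrite /M.
rewrite (@Mof_col T (4 * L)%N n e (@Pr F pc n X) j) (@Pr_col F pc n X j).
by rewrite dL.
Qed.
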